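(* Fix $\eta>0$ small, $\mathcal{I}=[\pi/4-\eta,\pi/4+\eta]$ and $\epsilon_0>0$ small. There exists $T>0$ such that $K^\parallel_{r,\epsilon}(\rho_\mu(t))<0$ and $K_\mu(t)<0$ for all $(t,s,r,\epsilon)\in[T,\infty)\times[0,\infty)\times\mathcal{I}\times[0,\epsilon_0]$, where $\mu=(s,r,\epsilon)$.
   Context: Fix $\varphi\in C^\infty(\mathbb{R})$ with $0\le\varphi\le1$, $\varphi(x)=0$ for $x\le0$, $\varphi(x)=1$ for $x\ge1$, and let $H$ be the Heaviside function ($H(x)=1$ for $x>0$, $H(x)=0$ for $x\le0$). For $r>0$, $\epsilon\ge0$ with $r+\epsilon<\pi/2$ and $\rho\ge0$ set $K^\parallel_{r,\epsilon}(\rho)=1-2\varphi((\rho-r)/\epsilon)$ if $\epsilon>0$ and $K^\parallel_{r,0}(\rho)=1-2H(\rho-r)$. Let $\mathcal{A}_{r,\epsilon}$ solve $\mathcal{A}''+K^\parallel_{r,\epsilon}\mathcal{A}=0$, $\mathcal{A}(0)=0$, $\mathcal{A}'(0)=1$ (for $\epsilon=0$: the unique $C^1$ function with these initial values solving the equation on $\rho\ne r$). For $\mu=(s,r,\epsilon)$, $\rho_\mu(t)$ is, for $s>0$, the solution of $\rho''=\frac{\mathcal{A}_{r,\epsilon}'(\rho)}{\mathcal{A}_{r,\epsilon}(\rho)}(1-(\rho')^2)$, $\rho(0)=s$, $\rho'(0)=0$, and $\rho_{0,r,\epsilon}(t)=t$. $K^\perp_{r,\epsilon}=\mathcal{A}_{r,\epsilon}^{-2}(1-(\mathcal{A}_{r,\epsilon}')^2)$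 and $K_\mu(t)=\rho_\mu'(t)^2K^\parallel_{r,\epsilon}(\rho_\mu(t))+(1-\rho_\mu'(t)^2)K^\perp_{r,\epsilon}(\rho_\mu(t))$. *)

(* Defs.v *)
From Stdlib Require Import Reals Lra.
Open Scope R_scope.

Definition smooth (phi : R -> R) : Prop :=
  exists D : nat -> R -> R,
    (forall x, D 0%nat x = phi x) /\
    (forall n x, derivable_pt_lim (D n) x (D (S n) x)).

Definition cutoff (phi : R -> R) : Prop :=
  smooth phi /\
  (forall x, 0 <= phi x <= 1) /\
  (forall x, x <= 0 -> phi x = 0) /\
  (forall x, 1 <= x -> phi x = 1).

Definition heaviside (x : R) : R := if Rlt_dec 0 x then 1 else 0.

Definition Kpar (phi : R -> R) (r eps rho : R) : R :=
  if Rlt_dec 0 eps then 1 - 2 * phi ((rho - r) / eps)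
  else 1 - 2 * heaviside (rho - r).

Definition is_A (phi : R -> R) (r eps : R) (A dA : R -> R) : Prop :=
  A 0 = 0 /\ dA 0 = 1 /\
  (forall x, derivable_pt_lim A x (dA x)) /\
  continuity dA /\
  (forall x, 0 <= x -> (0 < eps \/ x <> r) ->
     derivable_pt_lim dA x (- (Kpar phi r eps x * A x))).

(* rho_mu (with derivative drho), mu = (s, r, eps), given A_{r,eps} = A, A' = dA. *)
Definition is_rho (s : R) (A dA : R -> R) (rho drho : R -> R) : Prop :=
  (forall t, derivable_pt_lim rho t (drho t)) /\
  (s = 0 -> forall t, rho t = t) /\
  (0 < s ->
     rho 0 = s /\ drho 0 = 0 /\
     forall t, 0 <= t ->
       derivable_pt_lim drho t (dA (rho t) / A (rho t) * (1 - drho t ^ 2))).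

Definition Kperp (A dA : R -> R) (x : R) : R := (1 - dA x ^ 2) / (A x ^ 2).

Definition Kmu (phi : R -> R) (r eps : R) (A dA rho drho : R -> R) (t : R) : R :=
  drho t ^ 2 * Kpar phi r eps (rho t) + (1 - drho t ^ 2) * Kperp A dA (rho t).

(* Main.v *)
Require Import Defs.
From Stdlib Require Import Reals Lra FunctionalExtensionality.
Open Scope R_scope.
Lemma dext f x l l' : derivable_pt_lim f x l -> l = l' -> derivable_pt_lim f x l'.
Proof. intros H ->; exact H. Qed.
Lemma dplus f g x a b : derivable_pt_lim f x a -> derivable_pt_lim g x b ->
  derivable_pt_lim (fun y => f y + g y) x (a + b).
Proof. intros; exact (derivable_pt_lim_plus f g x a b H H0). Qed.
Lemma dminus f g x a b : derivable_pt_lim f x a -> derivable_pt_lim g x b ->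
  derivable_pt_lim (fun y => f y - g y) x (a - b).
Proof. intros; exact (derivable_pt_lim_minus f g x a b H H0). Qed.
Lemma dmult f g x a b : derivable_pt_lim f x a -> derivable_pt_lim g x b ->
  derivable_pt_lim (fun y => f y * g y) x (a * g x + f x * b).
Proof. intros; exact (derivable_pt_lim_mult f g x a b H H0). Qed.
Lemma dcomp f g x a b : derivable_pt_lim f x a -> derivable_pt_lim g (f x) b ->
  derivable_pt_lim (fun y => g (f y)) x (b * a).
Proof. intros; exact (derivable_pt_lim_comp f g x a b H H0). Qed.
Lemma dconst c x : derivable_pt_lim (fun _ => c) x 0.
Proof. exact (derivable_pt_lim_const c x). Qed.
Lemma did x : derivable_pt_lim (fun y => y) x 1.
Proof. exact (derivable_pt_lim_id x). Qed.
Lemma dsq f x a : derivable_pt_lim f x a -> derivable_pt_lim (fun y => f y ^ 2) x (2 * f x * a).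
Proof. intro H. eapply dext.
  - apply (derivable_pt_lim_comp f (fun y => y ^ 2)); [exact H| apply derivable_pt_lim_pow].
  - simpl; ring. Qed.
Lemma dexp f x a : derivable_pt_lim f x a -> derivable_pt_lim (fun y => exp (f y)) x (exp (f x) * a).
Proof. intro H. exact (derivable_pt_lim_comp f exp x a _ H (derivable_pt_lim_exp (f x))). Qed.

Lemma cplus f g x : continuity_pt f x -> continuity_pt g x -> continuity_pt (fun y => f y + g y) x.
Proof. intros; exact (continuity_pt_plus f g x H H0). Qed.
Lemma cminus f g x : continuity_pt f x -> continuity_pt g x -> continuity_pt (fun y => f y - g y) x.
Proof. intros; exact (continuity_pt_minus f g x H H0). Qed.
Lemma cmult f g x : continuity_pt f x -> continuity_pt g x -> continuity_pt (fun y => f y * g y) x.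
Proof. intros; exact (continuity_pt_mult f g x H H0). Qed.
Lemma csq f x : continuity_pt f x -> continuity_pt (fun y => f y ^ 2) x.
Proof. intros H. apply (continuity_pt_locally_ext (fun y => f y * f y) _ 1).
  - lra.
  - intros; ring.
  - apply cmult; auto. Qed.
Lemma dcont f x l : derivable_pt_lim f x l -> continuity_pt f x.
Proof. intro H. apply derivable_continuous_pt. exists l; exact H. Qed.
Lemma exp_le x y : x <= y -> exp x <= exp y.
Proof. intros [H|H]; [left; apply exp_increasing; auto| subst; lra]. Qed.
Lemma incr_gen (f g : R -> R) a b : a <= b ->
  (forall x, a <= x <= b -> continuity_pt f x) ->
  (forall x, a < x < b -> derivable_pt_lim f x (g x)) ->
  (forall x, a < x < b -> 0 <= g x) -> f a <= f b.
Proof.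
  intros Hab Hc Hd Hg.
  destruct (Req_dec a b) as [->|Hne]; [lra|].
  assert (pr1 : forall c, a < c < b -> derivable_pt f c).
  { intros c Hc'. exists (g c). apply Hd; exact Hc'. }
  assert (pr2 : forall c, a < c < b -> derivable_pt id c).
  { intros c _. apply derivable_pt_id. }
  destruct (MVT f id a b pr1 pr2 ltac:(lra) Hc
    (fun c _ => derivable_continuous_pt _ _ (derivable_pt_id c))) as [c [P HP]].
  rewrite (derive_pt_eq_0 _ _ _ (pr1 c P) (Hd c P)) in HP.
  rewrite (derive_pt_eq_0 _ _ _ (pr2 c P) (derivable_pt_lim_id c)) in HP.
  unfold id in HP. specialize (Hg c P). nra.
Qed.

Lemma const_gen (f g : R -> R) a b : a <= b ->
  (forall x, a <= x <= b -> continuity_pt f x) ->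
  (forall x, a < x < b -> derivable_pt_lim f x (g x)) ->
  (forall x, a < x < b -> g x = 0) -> f a = f b.
Proof.
  intros Hab Hc Hd Hg.
  assert (f a <= f b) by (apply (incr_gen f g); auto; intros x Hx; rewrite Hg; lra).
  assert ((fun y => - f y) a <= (fun y => - f y) b).
  { apply (incr_gen (fun y => - f y) (fun y => - g y) a b); auto.
    - intros x Hx. exact (continuity_pt_opp f x (Hc x Hx)).
    - intros x Hx. exact (derivable_pt_lim_opp f x _ (Hd x Hx)).
    - intros x Hx. rewrite Hg; lra. }
  simpl in *; lra.
Qed.
Lemma Kpar_le phi r eps x : cutoff phi -> 0 <= eps -> x <= r -> Kpar phi r eps x = 1.
Proof.
  intros [_ [_ [H0 _]]] He Hx. unfold Kpar.
  destruct (Rlt_dec 0 eps) as [h|h].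
  - rewrite H0; [lra|]. unfold Rdiv. assert (0 < / eps) by (apply Rinv_0_lt_compat; lra). nra.
  - unfold heaviside. destruct (Rlt_dec 0 (x - r)); lra.
Qed.

Lemma Kpar_gt phi r eps x : cutoff phi -> 0 <= eps -> r + eps < x -> Kpar phi r eps x = -1.
Proof.
  intros [_ [_ [_ H1]]] He Hx. unfold Kpar.
  destruct (Rlt_dec 0 eps) as [h|h].
  - rewrite H1; [lra|]. apply (Rmult_le_reg_r eps); [lra|]. unfold Rdiv.
    rewrite Rmult_assoc, Rinv_l; lra.
  - unfold heaviside. destruct (Rlt_dec 0 (x - r)); lra.
Qed.

Lemma Kpar_bd phi r eps x : cutoff phi -> -1 <= Kpar phi r eps x <= 1.
Proof.
  intros [_ [Hb _]]. unfold Kpar.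
  destruct (Rlt_dec 0 eps) as [h|h].
  - specialize (Hb ((x - r) / eps)). lra.
  - unfold heaviside. destruct (Rlt_dec 0 (x - r)); lra.
Qed.
Lemma A_sin phi r eps A dA : cutoff phi -> 0 < r -> 0 <= eps -> is_A phi r eps A dA ->
  forall x, 0 <= x <= r -> A x = sin x /\ dA x = cos x.
Proof.
  intros Hphi Hr He [HA0 [HdA0 [HAd [HdAc HdAd]]]] x Hx.
  set (g := fun y => (A y - sin y) ^ 2 + (dA y - cos y) ^ 2).
  assert (E : g 0 = g x).
  { apply (const_gen g (fun _ => 0)); [lra| | |auto].
    - intros y Hy. unfold g. apply cplus; apply csq; apply cminus.
      + exact (dcont _ _ _ (HAd y)).
      + exact (dcont _ _ _ (derivable_pt_lim_sin y)).
      + apply HdAc.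
      + exact (dcont _ _ _ (derivable_pt_lim_cos y)).
    - intros y Hy. unfold g. eapply dext.
      + apply dplus; apply dsq; apply dminus.
        * apply HAd.
        * apply derivable_pt_lim_sin.
        * apply HdAd; lra.
        * apply derivable_pt_lim_cos.
      + rewrite (Kpar_le phi r eps y Hphi He ltac:(lra)). ring. }
  unfold g in E. rewrite HA0, HdA0, sin_0, cos_0 in E.
  assert (E0 : (A x - sin x) ^ 2 + (dA x - cos x) ^ 2 = 0) by (rewrite <- E; ring).
  assert (0 <= (A x - sin x) ^ 2) by apply pow2_ge_0.
  assert (0 <= (dA x - cos x) ^ 2) by apply pow2_ge_0.
  split; nra.
Qed.
Lemma lin c x : derivable_pt_lim (fun y => c * y) x c.
Proof. apply (dext _ _ (0 * x + c * 1)); [apply (dmult (fun _ => c) (fun y => y)); [apply dconst|apply did]|ring]. Qed.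

Lemma A_trans phi r eps A dA : cutoff phi -> 0 < r -> 0 <= eps <= 1/20 -> is_A phi r eps A dA ->
  1/2 <= A r -> 1/2 <= dA r -> A r ^ 2 + dA r ^ 2 = 1 ->
  forall x, r <= x <= r + eps -> 2/5 <= A x <= 2 /\ 2/5 <= dA x <= 2.
Proof.
  intros Hphi Hr He HAA Ar dAr E1.
  destruct HAA as [HA0 [HdA0 [HAd [HdAc HdAd]]]].
  assert (HE : forall x, r <= x <= r + eps -> A x ^ 2 + dA x ^ 2 <= 3).
  { intros x Hx.
    set (G := fun y => (A y ^ 2 + dA y ^ 2) * exp (-2 * y)).
    assert (HG : (fun y => - G y) r <= (fun y => - G y) x).
    { apply (incr_gen (fun y => - G y)
        (fun y => - ((2 * A y * dA y + 2 * dA y * (- (Kpar phi r eps y * A y))) * exp (-2 * y)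
                    + (A y ^ 2 + dA y ^ 2) * (exp (-2 * y) * -2)))); [lra| | |].
      - intros y Hy. apply (continuity_pt_opp G). unfold G. apply (cmult (fun y => A y ^ 2 + dA y ^ 2) (fun y => exp (-2 * y))).
        + apply (cplus (fun y => A y ^ 2) (fun y => dA y ^ 2)); apply csq; [exact (dcont _ _ _ (HAd y)) | apply HdAc].
        + exact (dcont _ _ _ (dexp _ _ _ (lin (-2) y))).
      - intros y Hy. apply (derivable_pt_lim_opp G). unfold G. apply (dmult (fun y => A y ^ 2 + dA y ^ 2) (fun y => exp (-2 * y))).
        + apply (dplus (fun y => A y ^ 2) (fun y => dA y ^ 2)); apply dsq; [apply HAd | apply HdAd; lra].
        + apply (dexp (fun y => -2 * y)). apply lin.
      - intros y Hy. set (K := Kpar phi r eps y).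
        assert (HK : -1 <= K <= 1) by apply Kpar_bd, Hphi.
        assert (Hex : 0 < exp (-2 * y)) by apply exp_pos.
        assert (H2 : A y * dA y * (1 - K) <= A y ^ 2 + dA y ^ 2).
        { destruct (Rle_dec 0 (A y * dA y)).
          - assert (0 <= (A y - dA y) ^ 2) by apply pow2_ge_0. nra.
          - nra. }
        assert (H3 : 0 <= (A y ^ 2 + dA y ^ 2 - A y * dA y * (1 - K)) * exp (-2 * y)) by nra.
        nra. }
    simpl in HG. unfold G in HG. rewrite E1 in HG.
    assert (Hs : exp (-2 * r) = exp (2 * x - 2 * r) * exp (-2 * x)).
    { rewrite <- exp_plus. f_equal; ring. }
    assert (H3 : exp (2 * x - 2 * r) <= 3).
    { apply Rle_trans with (exp 1); [apply exp_le; lra| apply exp_le_3]. }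
    assert (Hex : 0 < exp (-2 * x)) by apply exp_pos.
    nra. }
  intros x Hx.
  assert (HB : forall y, r <= y <= r + eps -> -2 <= A y <= 2 /\ -2 <= dA y <= 2).
  { intros y Hy. specialize (HE y Hy).
    assert (0 <= A y ^ 2) by apply pow2_ge_0. assert (0 <= dA y ^ 2) by apply pow2_ge_0.
    split; split; nra. }
  assert (L1 : dA r + 2 * r <= dA x + 2 * x).
  { apply (incr_gen (fun y => dA y + 2 * y) (fun y => - (Kpar phi r eps y * A y) + 2)); [lra| | |].
    - intros y Hy. apply cplus; [apply HdAc| exact (dcont _ _ _ (lin 2 y))].
    - intros y Hy. apply dplus; [apply HdAd; lra| apply lin].
    - intros y Hy. assert (HK : -1 <= Kpar phi r eps y <= 1) by apply Kpar_bd, Hphi.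
      destruct (HB y ltac:(lra)) as [[? ?] _]. nra. }
  assert (L2 : A r + 2 * r <= A x + 2 * x).
  { apply (incr_gen (fun y => A y + 2 * y) (fun y => dA y + 2)); [lra| | |].
    - intros y Hy. apply cplus; [exact (dcont _ _ _ (HAd y))| exact (dcont _ _ _ (lin 2 y))].
    - intros y Hy. apply dplus; [apply HAd| apply lin].
    - intros y Hy. destruct (HB y ltac:(lra)) as [_ [? ?]]. lra. }
  destruct (HB x Hx). lra.
Qed.
Lemma A_beyond phi r eps A dA : cutoff phi -> 0 <= r -> 0 <= eps -> is_A phi r eps A dA ->
  2/5 <= A (r + eps) <= 2 -> 2/5 <= dA (r + eps) <= 2 ->
  forall x, r + eps <= x -> 2/5 <= A x /\ 2/5 <= dA x /\ A x <= 5 * dA x /\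
     (r + eps + 2 <= x -> 6/5 <= dA x).
Proof.
  intros Hphi Hr He HAA Ap dAp.
  destruct HAA as [HA0 [HdA0 [HAd [HdAc HdAd]]]].
  set (p := r + eps) in *.
  assert (Hd : forall y, p < y -> derivable_pt_lim dA y (A y)).
  { intros y Hy. eapply dext; [apply HdAd; unfold p in *; lra|].
    rewrite (Kpar_gt phi r eps y Hphi He ltac:(unfold p in *; lra)). ring. }
  assert (Hpos : forall x, p <= x -> 2/5 <= A x /\ 2/5 <= dA x).
  { intros x Hx.
    assert (C1 : (fun y => (A y + dA y) * exp (p - y)) p = (fun y => (A y + dA y) * exp (p - y)) x).
    { apply (const_gen (fun y => (A y + dA y) * exp (p - y)) (fun y => (dA y + A y) * exp (p - y) + (A y + dA y) * (exp (p - y) * (0 - 1)))); [lra| | |].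
      - intros y Hy. apply (cmult (fun y => A y + dA y) (fun y => exp (p - y))).
        + apply cplus; [exact (dcont _ _ _ (HAd y))| apply HdAc].
        + exact (dcont _ _ _ (dexp _ _ _ (dminus _ _ _ _ _ (dconst p y) (did y)))).
      - intros y Hy. apply (dmult (fun y => A y + dA y) (fun y => exp (p - y))).
        + apply dplus; [apply HAd| apply Hd; lra].
        + apply (dexp (fun y => p - y)). apply (dminus (fun _ => p) (fun y => y)); [apply dconst| apply did].
      - intros; ring. }
    assert (C2 : (fun y => (dA y - A y) * exp (y - p)) p = (fun y => (dA y - A y) * exp (y - p)) x).
    { apply (const_gen (fun y => (dA y - A y) * exp (y - p)) (fun y => (A y - dA y) * exp (y - p) + (dA y - A y) * (exp (y - p) * (1 - 0)))); [lra| | |].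
      - intros y Hy. apply (cmult (fun y => dA y - A y) (fun y => exp (y - p))).
        + apply cminus; [apply HdAc | exact (dcont _ _ _ (HAd y))].
        + exact (dcont _ _ _ (dexp _ _ _ (dminus _ _ _ _ _ (did y) (dconst p y)))).
      - intros y Hy. apply (dmult (fun y => dA y - A y) (fun y => exp (y - p))).
        + apply dminus; [apply Hd; lra| apply HAd].
        + apply (dexp (fun y => y - p)). apply (dminus (fun y => y) (fun _ => p)); [apply did| apply dconst].
      - intros; ring. }
    simpl in C1, C2. replace (p - p) with 0 in C1, C2 by ring. rewrite exp_0 in C1, C2.
    assert (Hm : 1 <= exp (x - p)) by (rewrite <- exp_0; apply exp_le; lra).
    assert (Hmn : exp (p - x) * exp (x - p) = 1) by (rewrite <- exp_plus, <- exp_0; f_equal; ring).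
    assert (Hn : 0 < exp (p - x)) by apply exp_pos.
    set (m := exp (x - p)) in *. set (n := exp (p - x)) in *.
    assert (S1 : A x + dA x = (A p + dA p) * m).
    { transitivity ((A x + dA x) * (n * m)); [rewrite Hmn; ring|]. rewrite <- Rmult_assoc, <- C1; ring. }
    assert (S2 : dA x - A x = (dA p - A p) * n).
    { transitivity ((dA x - A x) * (m * n)); [rewrite (Rmult_comm m n), Hmn; ring|]. rewrite <- Rmult_assoc, <- C2; ring. }
    assert (Hn1 : n <= 1) by nra.
    destruct (Rle_dec 0 (dA p - A p)); split; nra. }
  intros x Hx.
  destruct (Hpos x Hx) as [Ax dAx].
  assert (Ainc : A p <= A x).
  { apply (incr_gen A dA); [lra| | |].
    - intros y Hy. exact (dcont _ _ _ (HAd y)).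
    - intros y Hy. apply HAd.
    - intros y Hy. destruct (Hpos y ltac:(lra)); lra. }
  assert (Hc : dA x ^ 2 - A x ^ 2 = dA p ^ 2 - A p ^ 2).
  { apply eq_sym, (const_gen (fun y => dA y ^ 2 - A y ^ 2) (fun y => 2 * dA y * A y - 2 * A y * dA y)); [lra| | |].
    - intros y Hy. apply cminus; apply csq; [apply HdAc| exact (dcont _ _ _ (HAd y))].
    - intros y Hy. apply dminus; apply dsq; [apply Hd; lra| apply HAd].
    - intros; ring. }
  split; [lra|]. split; [lra|]. split.
  - assert (25 * dA x ^ 2 >= A x ^ 2) by nra. nra.
  - intro Hx2.
    assert (L : dA p - 2/5 * p <= dA x - 2/5 * x).
    { apply (incr_gen (fun y => dA y - 2/5 * y) (fun y => A y - 2/5)); [lra| | |].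
      - intros y Hy. apply cminus; [apply HdAc| exact (dcont _ _ _ (lin (2/5) y))].
      - intros y Hy. apply dminus; [apply Hd; lra| apply lin].
      - intros y Hy. destruct (Hpos y ltac:(lra)); lra. }
    unfold p in *. lra.
Qed.

Lemma A_props phi r eps A dA : cutoff phi -> PI/6 <= r <= PI/3 -> 0 <= eps <= 1/20 ->
  is_A phi r eps A dA ->
  (forall x, 0 < x -> 0 < A x /\ A x <= 10 * x * dA x) /\ (forall x, 4 <= x -> 1 < dA x ^ 2).
Proof.
  intros Hphi Hr He HAA.
  assert (HPI1 := PI2_3_2). assert (HPI2 := PI_4).
  assert (Hs : 1/2 <= sin r).
  { rewrite <- sin_PI6. apply sin_incr_1; lra. }
  assert (Hc : 1/2 <= cos r).
  { rewrite <- cos_PI3. apply cos_decr_1; lra. }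
  destruct (A_sin phi r eps A dA Hphi ltac:(lra) ltac:(lra) HAA r ltac:(lra)) as [Ar dAr].
  assert (E1 : A r ^ 2 + dA r ^ 2 = 1).
  { rewrite Ar, dAr. pose proof (sin2_cos2 r) as H. unfold Rsqr in H. nra. }
  pose proof (A_trans phi r eps A dA Hphi ltac:(lra) He HAA ltac:(lra) ltac:(lra) E1) as Tr.
  destruct (Tr (r + eps) ltac:(lra)) as [Tp1 Tp2].
  pose proof (A_beyond phi r eps A dA Hphi ltac:(lra) ltac:(lra) HAA Tp1 Tp2) as Bd.
  split.
  - intros x Hx.
    destruct (Rle_dec x r) as [h1|h1].
    + destruct (A_sin phi r eps A dA Hphi ltac:(lra) ltac:(lra) HAA x ltac:(lra)) as [Ax dAx].
      rewrite Ax, dAx.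
      assert (0 < sin x) by (apply sin_gt_0; lra).
      assert (sin x < x) by (apply sin_lt_x; lra).
      assert (1/2 <= cos x) by (rewrite <- cos_PI3; apply cos_decr_1; lra).
      split; nra.
    + destruct (Rle_dec x (r + eps)) as [h2|h2].
      * destruct (Tr x ltac:(lra)). split; nra.
      * destruct (Bd x ltac:(lra)) as [? [? [? _]]]. split; nra.
  - intros x Hx. destruct (Bd x ltac:(lra)) as [_ [_ [_ H]]]. specialize (H ltac:(lra)). nra.
Qed.
Lemma rho_big s A dA rho drho : 0 < s -> A 0 = 0 -> (forall x, derivable_pt_lim A x (dA x)) ->
  (forall x, 0 < x -> 0 < A x /\ A x <= 10 * x * dA x) -> is_rho s A dA rho drho ->
  forall t, 0 <= t -> 0 < rho t /\ 0 < 1 - drho t ^ 2 /\ t ^ 2 <= 10 * rho t ^ 2.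
Proof.
  intros Hs HA0 HAd HP [Hrd [_ H]].
  destruct (H Hs) as [r0 [d0 Hdd]]. clear H.
  assert (As : 0 < A s) by (apply HP; lra).
  assert (W : forall t, 0 <= t -> (1 - drho t ^ 2) * A (rho t) ^ 2 = A s ^ 2).
  { intros t Ht.
    assert (C : (fun y => (1 - drho y ^ 2) * A (rho y) ^ 2) 0 = (fun y => (1 - drho y ^ 2) * A (rho y) ^ 2) t).
    { apply (const_gen (fun y => (1 - drho y ^ 2) * A (rho y) ^ 2)
        (fun y => (0 - 2 * drho y * (dA (rho y) / A (rho y) * (1 - drho y ^ 2))) * A (rho y) ^ 2
                  + (1 - drho y ^ 2) * (2 * A (rho y) * (dA (rho y) * drho y)))); [lra| | |].
      - intros y Hy. apply (cmult (fun y => 1 - drho y ^ 2) (fun y => A (rho y) ^ 2)).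
        + apply (cminus (fun _ => 1) (fun y => drho y ^ 2)).
          * apply continuity_pt_const. intros a b; reflexivity.
          * apply csq. exact (dcont _ _ _ (Hdd y ltac:(lra))).
        + apply (csq (fun y => A (rho y))). exact (dcont _ _ _ (dcomp rho A y _ _ (Hrd y) (HAd (rho y)))).
      - intros y Hy. apply (dmult (fun y => 1 - drho y ^ 2) (fun y => A (rho y) ^ 2)).
        + apply (dminus (fun _ => 1) (fun y => drho y ^ 2)); [apply dconst| apply dsq, Hdd; lra].
        + apply (dsq (fun y => A (rho y))). exact (dcomp rho A y _ _ (Hrd y) (HAd (rho y))).
      - intros y Hy. destruct (Req_dec (A (rho y)) 0) as [h|h].
        + rewrite h. ring.
        + field. exact h. }
    cbv beta in C. rewrite <- C, r0, d0. ring. }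
  assert (Pos : forall t, 0 <= t -> 0 < rho t).
  { intros t Ht. destruct (Rlt_le_dec 0 (rho t)) as [h|h]; [exact h|].
    exfalso. destruct (Req_dec t 0) as [->|ht]; [lra|].
    destruct h as [h|h].
    - assert (Hcont : continuity (fun y => - rho y)).
      { intro y. exact (continuity_pt_opp rho y (dcont _ _ _ (Hrd y))). }
      destruct (IVT (fun y => - rho y) 0 t Hcont ltac:(lra) ltac:(lra) ltac:(lra)) as [z [Hz1 Hz2]].
      specialize (W z ltac:(lra)). replace (rho z) with 0 in W by lra. rewrite HA0 in W. nra.
    - specialize (W t Ht). rewrite h, HA0 in W. nra. }
  assert (Key : forall t, 0 <= t -> 0 < A (rho t) /\ 0 < 1 - drho t ^ 2).
  { intros t Ht. assert (h := Pos t Ht). destruct (HP _ h) as [h1 h2]. split; [exact h1|].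
    specialize (W t Ht). assert (0 < A (rho t) ^ 2) by nra. nra. }
  assert (Kd : forall y, 0 <= y ->
     0 <= (0 * rho y + 2 * drho y) * drho y + 2 * rho y * (dA (rho y) / A (rho y) * (1 - drho y ^ 2)) - 1/5).
  { intros y Hy. destruct (Key y Hy) as [k1 k2]. destruct (HP _ (Pos y Hy)) as [_ k3].
    set (q := dA (rho y) / A (rho y)).
    assert (Hq : A (rho y) * q = dA (rho y)) by (unfold q; field; lra).
    assert (Hrq : 1/10 <= rho y * q).
    { assert (A (rho y) * (rho y * q - 1/10) >= 0) by nra. nra. }
    assert (0 <= drho y ^ 2) by apply pow2_ge_0. nra. }
  assert (Kinc : forall t, 0 <= t -> 0 <= 2 * rho t * drho t - 1/5 * t).
  { intros t Ht.
    assert (I : (fun y => 2 * rho y * drho y - 1/5 * y) 0 <= (fun y => 2 * rho y * drho y - 1/5 * y) t).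
    { apply (incr_gen (fun y => 2 * rho y * drho y - 1/5 * y)
        (fun y => (0 * rho y + 2 * drho y) * drho y + 2 * rho y * (dA (rho y) / A (rho y) * (1 - drho y ^ 2)) - 1/5)); [lra| | |].
      - intros y Hy. apply (cminus (fun y => 2 * rho y * drho y) (fun y => 1/5 * y)).
        + apply (cmult (fun y => 2 * rho y) drho).
          * apply (cmult (fun _ => 2) rho); [apply continuity_pt_const; intros a b; reflexivity| exact (dcont _ _ _ (Hrd y))].
          * exact (dcont _ _ _ (Hdd y ltac:(lra))).
        + apply (cmult (fun _ => 1/5) (fun y => y)); [apply continuity_pt_const; intros a b; reflexivity| exact (dcont _ _ _ (did y))].
      - intros y Hy. eapply dext.
        + apply (dminus (fun y => 2 * rho y * drho y) (fun y => 1/5 * y)).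
          * apply (dmult (fun y => 2 * rho y) drho); [apply (dmult (fun _ => 2) rho); [apply dconst| apply Hrd]| apply Hdd; lra].
          * apply (dmult (fun _ => 1/5) (fun y => y)); [apply dconst| apply did].
        + ring.
      - intros y Hy. apply Kd. lra. }
    cbv beta in I. rewrite r0, d0 in I. lra. }
  intros t Ht.
  assert (I : (fun y => rho y ^ 2 - 1/10 * y ^ 2) 0 <= (fun y => rho y ^ 2 - 1/10 * y ^ 2) t).
  { apply (incr_gen (fun y => rho y ^ 2 - 1/10 * y ^ 2) (fun y => 2 * rho y * drho y - 1/5 * y)); [lra| | |].
    - intros y Hy. apply (cminus (fun y => rho y ^ 2) (fun y => 1/10 * y ^ 2)).
      + apply csq. exact (dcont _ _ _ (Hrd y)).
      + apply (cmult (fun _ => 1/10) (fun y => y ^ 2)); [apply continuity_pt_const; intros a b; reflexivity| apply (csq (fun y => y)); exact (dcont _ _ _ (did y))].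
    - intros y Hy. eapply dext.
      + apply (dminus (fun y => rho y ^ 2) (fun y => 1/10 * y ^ 2)).
        * apply dsq, Hrd.
        * apply (dmult (fun _ => 1/10) (fun y => y ^ 2)); [apply dconst| apply (dsq (fun y => y)), did].
      + lra.
    - intros y Hy. apply Kinc. lra. }
  cbv beta in I. rewrite r0 in I.
  destruct (Key t Ht). split; [apply Pos; lra|]. split; [lra|]. nra.
Qed.

Theorem lemma3p15 (phi : R -> R) (Hphi : cutoff phi) :
  exists eta0, 0 < eta0 /\
  forall eta, 0 < eta < eta0 ->
  exists eps1, 0 < eps1 /\
  forall eps0, 0 < eps0 < eps1 ->
  exists T, 0 < T /\
  forall (t s r eps : R),
    T <= t -> 0 <= s ->
    PI / 4 - eta <= r <= PI / 4 + eta ->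
    0 <= eps <= eps0 ->
    forall (A dA rho drho : R -> R),
      is_A phi r eps A dA ->
      is_rho s A dA rho drho ->
      Kpar phi r eps (rho t) < 0 /\ Kmu phi r eps A dA rho drho t < 0.
Proof.
  exists (1/20). split; [lra|]. intros eta Heta.
  exists (1/20). split; [lra|]. intros eps0 Heps0.
  exists 13. split; [lra|].
  intros t s r eps Ht Hs Hr He A dA rho drho HA Hrho.
  assert (HPI1 := PI2_3_2). assert (HPI2 := PI_4).
  destruct (A_props phi r eps A dA Hphi ltac:(lra) ltac:(lra) HA) as [P1 P2].
  assert (Kb : forall x, 4 <= x -> Kpar phi r eps x = -1).
  { intros x Hx. apply Kpar_gt; [exact Hphi| lra| lra]. }
  destruct HA as [HA0 [_ [HAd _]]].
  destruct (Rle_lt_or_eq_dec 0 s Hs) as [Hs'|Hs'].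
  - destruct (rho_big s A dA rho drho Hs' HA0 HAd P1 Hrho t ltac:(lra)) as [R1 [R2 R3]].
    assert (R4 : 4 <= rho t) by nra.
    rewrite (Kb _ R4). split; [lra|].
    unfold Kmu, Kperp. rewrite (Kb _ R4).
    destruct (P1 (rho t) ltac:(lra)) as [Ap _].
    assert (Hb := P2 (rho t) R4).
    assert (Hi : 0 < / (A (rho t) ^ 2)) by (apply Rinv_0_lt_compat; nra).
    assert (Hk : (1 - dA (rho t) ^ 2) / A (rho t) ^ 2 < 0).
    { unfold Rdiv. nra. }
    assert (0 <= drho t ^ 2) by apply pow2_ge_0. nra.
  - subst s. destruct Hrho as [Hrd [H0 _]].
    assert (Er : rho = fun y => y) by (apply functional_extensionality; exact (H0 eq_refl)).
    assert (Ed : drho t = 1).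
    { apply (uniqueness_limite rho t); [apply Hrd| rewrite Er; apply did]. }
    unfold Kmu. rewrite Ed, Er. rewrite (Kb t ltac:(lra)). split; lra.
Qed.
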